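(* Let $M\in\mathcal{G}$. In the bosonic case, $C_M=\frac12(M-JMJ)$ is always invertible. In the fermionic case, $C_M$ is invertible if and only if $\Delta_{M^{-1}}=-M^{-1}JMJ$ has no eigenvalue equal to $-1$.
   Context: Bosonic case: $V=\mathbb{R}^{2N}$ with symplectic form $\Omega=\begin{pmatrix}0&\mathbb{1}\\-\mathbb{1}&0\end{pmatrix}$, $\mathcal{G}=\mathrm{Sp}(2N,\mathbb{R})=\{M\in\mathrm{SL}(2N,\mathbb{R}):M\Omega M^\intercal=\Omega\}$, and $J$ a real linear map with $J^2=-\mathbb{1}$, $J\Omega J^\intercal=\Omega$, $-J\Omega$ positive definite. Fermionic case: $V=\mathbb{R}^{2N}$ with metric $G=\mathbb{1}$, $\mathcal{G}=\mathrm{SO}(2N,\mathbb{R})$, $J$ real with $J^2=-\mathbb{1}$ and $JGJ^\intercal=G$. *)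

(* Defs.v *)
From HB Require Import structures.
From mathcomp Require Import all_boot all_order all_algebra.
Set Implicit Arguments. Unset Strict Implicit. Unset Printing Implicit Defensive.
Import Order.TTheory GRing.Theory Num.Theory.
Local Open Scope ring_scope.

Definition Omega (R : realFieldType) (N : nat) : 'M[R]_(N + N) :=
  block_mx 0 1%:M (- 1%:M) 0.

Definition symplectic (R : realFieldType) (N : nat) (M : 'M[R]_(N + N)) : Prop :=
  \det M = 1 /\ M *m Omega R N *m M^T = Omega R N.

(* SO(2N,R) with metric G = 1 *)
Definition special_orthogonal (R : realFieldType) (N : nat) (M : 'M[R]_(N + N)) : Prop :=
  \det M = 1 /\ M *m M^T = 1%:M.

Definition posdef (R : realFieldType) (n : nat) (A : 'M[R]_n) : Prop :=
  A^T = A /\ forall v : 'rV[R]_n, v != 0 -> 0 < (v *m A *m v^T) 0 0.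

Definition bos_cplx (R : realFieldType) (N : nat) (J : 'M[R]_(N + N)) : Prop :=
  J *m J = - 1%:M /\ J *m Omega R N *m J^T = Omega R N /\
  posdef (- (J *m Omega R N)).

Definition ferm_cplx (R : realFieldType) (N : nat) (J : 'M[R]_(N + N)) : Prop :=
  J *m J = - 1%:M /\ J *m 1%:M *m J^T = 1%:M.

Definition C_of (R : realFieldType) (n : nat) (J M : 'M[R]_n) : 'M[R]_n :=
  (2%:R)^-1 *: (M - J *m M *m J).

Definition Delta_of (R : realFieldType) (n : nat) (J M : 'M[R]_n) : 'M[R]_n :=
  - (M *m J *m invmx M *m J).

(* Main.v *)
Require Import Defs.
From HB Require Import structures.
From mathcomp Require Import all_boot all_order all_algebra.
Import Order.TTheory GRing.Theory Num.Theory.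
Local Open Scope ring_scope.

Lemma unit_iff (R : realFieldType) n (A : 'M[R]_n) :
  A \in unitmx <-> (forall v : 'rV_n, v *m A = 0 -> v = 0).
Proof.
rewrite -row_free_unit; split.
  by move=> Hf v Hv; apply/eqP; rewrite -(mulmx_free_eq0 _ Hf) Hv.
exact: inj_row_free.
Qed.

Lemma two_unit (R : realFieldType) : (2%:R : R)^-1 \is a GRing.unit.
Proof. by rewrite unitfE invr_eq0 pnatr_eq0. Qed.

Theorem lemma1 (R : realFieldType) (N : nat) :
  (forall J M : 'M[R]_(N + N), bos_cplx J -> symplectic M ->
     C_of J M \in unitmx) /\
  (forall J M : 'M[R]_(N + N), ferm_cplx J -> special_orthogonal M ->
     (C_of J M \in unitmx <-> ~ eigenvalue (Delta_of J (invmx M)) (-1))).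
Proof.
split.
  move=> J M [JJ [JOJ [GT Gpos]]] [_ MOM].
  set Om := Omega R N in JOJ GT Gpos MOM *.
  set G := - (J *m Om) in GT Gpos.
  have Ha : J *m G = Om.
    by rewrite /G mulmxN mulmxA JJ mulNmx mul1mx opprK.
  have Hb : G *m J^T = - Om.
    by rewrite /G mulNmx JOJ.
  have Hc : Om *m J^T = G.
    by rewrite -{1}Ha -mulmxA Hb mulmxN.
  have Hkey : M *m G *m (J *m M *m J)^T = - G.
    rewrite !trmx_mul !mulmxA -(mulmxA M G) Hb mulmxN mulNmx mulNmx MOM Hc.
    by [].
  have nonneg : forall w : 'rV[R]_(N + N), 0 <= (w *m G *m w^T) 0 0.
    move=> w; case: (eqVneq w 0) => [->|wn0].
      by rewrite !mul0mx mxE.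
    exact/ltW/Gpos.
  rewrite /C_of unitmxZ ?two_unit //; apply/unit_iff => v Hv.
  apply/eqP; apply/negP => vn0.
  have Hx : v *m M = v *m (J *m M *m J).
    by apply/eqP; rewrite -subr_eq0 -mulmxBr Hv.
  have E : (v *m M) *m G *m (v *m M)^T = - (v *m G *m v^T).
    rewrite [X in _ *m X^T]Hx trmx_mul !mulmxA -(mulmxA v M G).
    by rewrite -(mulmxA v (M *m G)) Hkey mulmxN mulNmx.
  have h1 := nonneg (v *m M).
  have h2 := Gpos v (introN idP vn0).
  rewrite E mxE in h1.
  by move: h1; rewrite oppr_ge0 leNgt h2.
move=> J M _ [dM _].
have Mu : M \in unitmx by rewrite unitmxE dM unitr1.
set D := Delta_of J (invmx M).
have HC : C_of J M = 2%:R^-1 *: (M *m (1%:M + D)).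
  rewrite /C_of /D /Delta_of invmxK mulmxDr mulmx1 mulmxN !mulmxA mulmxV // mul1mx.
  by [].
rewrite HC unitmxZ ?two_unit // unitmx_mul Mu /=; split.
  move=> /unit_iff H /eigenvalueP [v Hv vn0].
  move/eqP: vn0; apply; apply: H.
  by rewrite mulmxDr mulmx1 Hv scaleN1r subrr.
move=> H; apply/unit_iff => v Hv; apply/eqP; apply/negP => vn0; apply: H.
apply/eigenvalueP; exists v; last exact: (introN idP vn0).
by rewrite scaleN1r; apply/eqP; rewrite -addr_eq0 addrC -[v in v + _]mulmx1 -mulmxDr Hv.
Qed.
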